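(* The assignment $\sigma:\mathcal W\to\mathfrak V$, $R_{\mathbf i}\mapsto S_{(\mathbf i,\mathbf m)}$, is a well-defined bijection (not necessarily a monoid homomorphism).
   Context: $I$ countable, $A=(a_{ij})$ a Borcherds–Cartan matrix ($a_{ii}=2$ or $a_{ii}\in\mathbb Z_{\le0}$; $a_{ij}\in\mathbb Z_{\le0}$ for $i\ne j$; $a_{ij}=0\iff a_{ji}=0$), $I^{re}=\{a_{ii}=2\}$, $I^{im}=I\setminus I^{re}$, with datum $(A,\{\alpha_i\},\{\alpha_i^\vee\},P,P^\vee)$, $\alpha_i^\vee(\alpha_j)=a_{ij}$, and $r_i\in GL(\mathfrak h^* )$, $r_i(\mu)=\mu-\alpha_i^\vee(\mu)\alpha_i$. The monoid $\mathcal W$ is generated by symbols $r_i$ ($i\in I$) subject to: $r_i^2=1$ for $i\in I^{re}$; $(r_ir_j)^m=(r_jr_i)^m=1$ for $i\neq j$ in $I^{re}$ when the order of $r_ir_j$ in $GL(\mathfrak h^* )$ is $m\in\{2,3,4,6\}$; $r_ir_j=r_jr_i$ for $i\in I^{im}$, $j\in I\setminus\{i\}$ with $a_{ij}=0$. For a finite sequence $\mathbf i=(i_k,\ldots,i_1)$ in $I$, $R_{\mathbf i}=r_{i_k}\cdots r_{i_1}\in\mathcal W$. Let $\tilde I=\{(i,1)\}_{i\in I^{re}}\sqcup\{(i,m)\}_{i\in I^{im},m\in\mathbb Z_{\ge1}}$ and $\mathfrak W$ the Coxeter group with generators $s_{(i,m)}$, $(i,m)\in\tilde I$, and Coxeter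 matrix $x_{(i,m),(i,m)}=1$; $x_{(i,1),(j,1)}$ = order of $r_ir_j$ in $GL(\mathfrak h^* )$ for $i,j\in I^{re}$; and for $i\in I^{im}$, $m\ge1$ and $(j,n)\ne(i,m)$: $x_{(i,m),(j,n)}=x_{(j,n),(i,m)}=2$ if $a_{ij}=0$ and $\infty$ otherwise. For $\mathbf i=(i_k,\dots,i_1)$, the ordered index $(\mathbf i,\mathbf m)$ has $\mathbf m=(m_k,\ldots,m_1)$ with $m_s=1$ if $i_s\in I^{re}$ and $m_s=\#\{1\le t\le s:i_t=i_s\}$ if $i_s\in I^{im}$; $S_{(\mathbf i,\mathbf m)}=s_{(i_k,m_k)}\cdots s_{(i_1,m_1)}\in\mathfrak W$, and $\mathfrak V=\{S_{(\mathbf i,\mathbf m)}:\mathbf i\text{ a finite sequence in }I\}\subset\mathfrak W$. *)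

(* Defs.v *)
From HB Require Import structures.
From mathcomp Require Import all_boot all_order all_algebra.
Set Implicit Arguments. Unset Strict Implicit. Unset Printing Implicit Defensive.
Import GRing.Theory.
Local Open Scope ring_scope.

(* Congruence (two-sided, equivalence) closure on words of a relation R:
   the equality of the monoid presented by generators T and relations R. *)
Inductive congr_cl (T : Type) (R : seq T -> seq T -> Prop) : seq T -> seq T -> Prop :=
| cc_rel s u v t : R u v -> congr_cl R (s ++ u ++ t) (s ++ v ++ t)
| cc_refl w : congr_cl R w w
| cc_sym w w' : congr_cl R w w' -> congr_cl R w' w
| cc_trans w1 w2 w3 : congr_cl R w1 w2 -> congr_cl R w2 w3 -> congr_cl R w1 w3.

Definition altw (T : Type) (x y : T) (m : nat) : seq T := flatten (nseq m [:: x; y]).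

Section BC.
Variable I : countType.
Variable a : I -> I -> int.

Definition is_real (i : I) : bool := a i i == 2%:Z.

Definition BC_matrix : Prop :=
  [/\ (forall i, a i i = 2%:Z \/ a i i <= 0),
      (forall i j, i != j -> a i j <= 0) &
      (forall i j, a i j = 0 <-> a j i = 0)].

Section Realization.
Variables (F : fieldType) (V : lmodType F) (alpha : I -> V) (alphav : I -> V -> F).

(* h^dual = V over a field F of characteristic 0; alpha_i in h^dual linearly
   independent; alpha_i^vee linear forms with alpha_i^vee(alpha_j) = a_ij. *)
Definition realization : Prop :=
  [/\ [pchar F] =i pred0,
      (forall i c u v, alphav i (c *: u + v) = c * alphav i u + alphav i v),
      (forall i j, alphav i (alpha j) = (a i j)%:~R) &
      (forall (s : seq I) (c : I -> F), uniq s ->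
          \sum_(i <- s) c i *: alpha i = 0 -> forall i, i \in s -> c i = 0)].

Definition refl (i : I) (mu : V) : V := mu - alphav i mu *: alpha i.

Definition is_order (f : V -> V) (m : nat) : Prop :=
  [/\ (0 < m)%N, (forall v, iter m f v = v) &
      (forall k, (0 < k < m)%N -> (exists v, iter k f v <> v))].

(* words [:: i_k; ...; i_1] stand for r_{i_k} ... r_{i_1} *)
Inductive Wrel : seq I -> seq I -> Prop :=
| Wrel_sq i : is_real i -> Wrel [:: i; i] [::]
| Wrel_braid1 i j m : is_real i -> is_real j -> i != j -> m \in [:: 2; 3; 4; 6]%N ->
    is_order (refl i \o refl j) m -> Wrel (altw i j m) [::]
| Wrel_braid2 i j m : is_real i -> is_real j -> i != j -> m \in [:: 2; 3; 4; 6]%N ->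
    is_order (refl i \o refl j) m -> Wrel (altw j i m) [::]
| Wrel_comm i j : ~~ is_real i -> j != i -> a i j = 0 -> Wrel [:: i; j] [:: j; i].

Definition Weq : seq I -> seq I -> Prop := congr_cl Wrel.

(* the index set \tilde I, as a predicate on I * nat *)
Definition tvalid (p : I * nat) : bool :=
  if is_real p.1 then p.2 == 1%N else (0 < p.2)%N.

Definition cox_fin (p q : I * nat) (m : nat) : Prop :=
  if is_real p.1 && is_real q.1 then is_order (refl p.1 \o refl q.1) m
  else m = 2%N /\ a p.1 q.1 = 0.

(* Coxeter presentation of \mathfrak W, as a monoid presentation (generators
   are involutions, so this monoid is the group) *)
Inductive Crel : seq (I * nat) -> seq (I * nat) -> Prop :=
| Crel_sq p : tvalid p -> Crel [:: p; p] [::]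
| Crel_cox p q m : tvalid p -> tvalid q -> p != q -> cox_fin p q m ->
    Crel (altw p q m) [::].

Definition Ceq : seq (I * nat) -> seq (I * nat) -> Prop := congr_cl Crel.

End Realization.

(* (i, m) -> word of S_{(i,m)}: for i = [:: i_k; ...; i_1],
   m_s = 1 if i_s real, #{t <= s | i_t = i_s} otherwise *)
Fixpoint sigmaw (w : seq I) : seq (I * nat) :=
  match w with
  | [::] => [::]
  | i :: l => (i, if is_real i then 1%N else (count_mem i l).+1) :: sigmaw l
  end.

End BC.

(* Main.v *)
Require Import Defs.
From HB Require Import structures.
From mathcomp Require Import all_boot all_order all_algebra.
From mathcomp Require Import ring lra zify.
From Stdlib Require Import ClassicalEpsilon Classical.
Import GRing.Theory.
Local Open Scope ring_scope.

Set Implicit Arguments. Unset Strict Implicit. Unset Printing Implicit Defensive.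



Section CC.
Variables (T : Type) (R : seq T -> seq T -> Prop).
Lemma cc_ctx s t u v : congr_cl R u v -> congr_cl R (s ++ u ++ t) (s ++ v ++ t).
Proof.
elim=> [s0 u0 v0 t0 H| w | w w' _ IH | w1 w2 w3 _ IH1 _ IH2].
- have e x : s ++ (s0 ++ x ++ t0) ++ t = (s ++ s0) ++ x ++ (t0 ++ t).
    by rewrite !catA.
  rewrite !e; exact: cc_rel.
- exact: cc_refl.
- exact: cc_sym.
- exact: cc_trans IH2.
Qed.
Lemma cc_cons x u v : congr_cl R u v -> congr_cl R (x :: u) (x :: v).
Proof. by move=> H; have := cc_ctx [:: x] [::] H; rewrite !cats0. Qed.
Lemma cc_catl s u v : congr_cl R u v -> congr_cl R (s ++ u) (s ++ v).
Proof. by move=> H; have := cc_ctx s [::] H; rewrite !cats0. Qed.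
Lemma cc_catr t u v : congr_cl R u v -> congr_cl R (u ++ t) (v ++ t).
Proof. by move=> H; have := cc_ctx [::] t H. Qed.
End CC.

Lemma altwS (T : Type) (x y : T) m : altw x y m.+1 = x :: y :: altw x y m.
Proof. by []. Qed.

Lemma rem_cat (T : eqType) (x : T) s t :
  rem x (s ++ t) = if x \in s then rem x s ++ t else s ++ rem x t.
Proof.
elim: s => [|y s IH]; first by rewrite in_nil.
rewrite cat_cons !rem_cons in_cons (eq_sym y x); case: (x == y) => //=.
by rewrite IH; case: (x \in s).
Qed.

Lemma rem_rem (T : eqType) (x y : T) s : rem x (rem y s) = rem y (rem x s).
Proof.
elim: s => [|z s IH] //.
rewrite !(rem_cons _ z).
case: (eqVneq z y) => [ezy|nzy]; case: (eqVneq z x) => [ezx|nzx].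
- by rewrite -ezx -ezy.
- by rewrite rem_cons ezy eqxx.
- by rewrite rem_cons ezx eqxx.
- by rewrite !rem_cons (negbTE nzy) (negbTE nzx) IH.
Qed.

Lemma mem_count (T : eqType) (x : T) s : (x \in s) = (0 < count_mem x s)%N.
Proof.
case: (boolP (x \in s)) => [h|/count_memPn ->] //.
by apply/esym; rewrite lt0n; apply/eqP => /count_memPn; rewrite h.
Qed.


Definition gst (R : comNzRingType) (A B : R) (s : R * R * R * R) : R * R * R * R :=
  let: (P, Q, X, Y) := s in
  (P + (Q * A - P) * 2 + (- Q) * A, Q + (Q * A - P) * B + (- Q) * 2, X + (Q * A - P), Y + - Q).

Lemma gst_morph (R S : comNzRingType) (f : {rmorphism R -> S}) A B k P Q X Y :
  iter k (gst (f A) (f B)) (f P, f Q, f X, f Y) =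
  let: (P', Q', X', Y') := iter k (gst A B) (P, Q, X, Y) in (f P', f Q', f X', f Y').
Proof.
elim: k => [|n IHn]; first by []. rewrite iterS IHn iterS.
case: (iter n (gst A B) (P, Q, X, Y)) => [[[P' Q'] X'] Y'] /=.
by rewrite !(rmorphD, rmorphB, rmorphM, rmorphN) rmorph1.
Qed.


Definition hst (A B : int) (x : int * int) : int * int :=
  ((A * B - 1) * x.1 + A * x.2, - B * x.1 - x.2).

Lemma g_h (A B : int) k :
  iter k (gst A B) (2, B, 0, 0) =
  let x := iter k (hst A B) (1, 0) in
  (2 + 2 * (x.1 - 1) + A * x.2, B + B * (x.1 - 1) + 2 * x.2, x.1 - 1, x.2).
Proof.
elim: k => [|k IH] /=; first by congr (_, _, _, _); ring.
rewrite IH /=; case: (iter k (hst A B) (1, 0)) => c e /=.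
congr (_, _, _, _); ring.
Qed.

Lemma hh (A B : int) x :
  hst A B (hst A B x) = ((A * B - 2) * (hst A B x).1 - x.1, (A * B - 2) * (hst A B x).2 - x.2).
Proof. case: x => c e; rewrite /hst /=; congr (_, _); ring. Qed.

Lemma e_pos (A B : int) : A < 0 -> B < 0 -> 4 <= A * B ->
  forall k, (0 < k)%N -> (iter k (hst A B) (1, 0)).2 != 0.
Proof.
move=> hA hB hAB.
pose e k := (iter k (hst A B) (1, 0)).2.
have rec k : e k.+2 = (A * B - 2) * e k.+1 - e k.
  by rewrite /e !iterS hh -iterS.
have H k : 0 <= e k < e k.+1.
  elim: k => [|k /andP [h1 h2]].
    rewrite /e /= /hst /=; lia.
  rewrite rec. nia.
case=> [//|k] _; have := H k; rewrite -/(e k.+1) => /andP [h1 h2].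
by apply/eqP; lia.
Qed.
Section Ord.
Variable I : countType.
Variable a : I -> I -> int.
Variables (F : fieldType) (V : lmodType F) (alpha : I -> V) (alphav : I -> V -> F).
Hypothesis BC : BC_matrix a.
Hypothesis RZ : realization a alpha alphav.

Local Notation isr := (is_real a).
Local Notation refl := (refl alpha alphav).

Lemma lin i c u v : alphav i (c *: u + v) = c * alphav i u + alphav i v.
Proof. by case: RZ => _ h _ _; apply: h. Qed.

Lemma lin0 i : alphav i 0 = 0.
Proof.
have := lin i 1 0 0; rewrite scale1r addr0 mul1r.
by move=> /(congr1 (fun x => x - alphav i 0)); rewrite subrr addrK.
Qed.

Lemma linD i u v : alphav i (u + v) = alphav i u + alphav i v.
Proof. by rewrite -{1}(scale1r u) lin mul1r. Qed.

Lemma linZ i c u : alphav i (c *: u) = c * alphav i u.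
Proof. by rewrite -(addr0 (c *: u)) lin lin0 addr0. Qed.

Lemma linN i u : alphav i (- u) = - alphav i u.
Proof. by rewrite -scaleN1r linZ mulN1r. Qed.

Lemma cartan i j : alphav i (alpha j) = (a i j)%:~R.
Proof. by case: RZ => _ _ h _; apply: h. Qed.

Lemma indep2 i j (X Y : F) : i != j -> X *: alpha i + Y *: alpha j = 0 -> X = 0 /\ Y = 0.
Proof.
move=> ij h; case: RZ => _ _ _ hind.
have u : uniq [:: i; j] by rewrite /= inE ij.
have := hind [:: i; j] (fun k => if k == i then X else Y) u.
rewrite big_cons big_cons big_nil eqxx eq_sym (negbTE ij) addr0 => /(_ h) H.
split; first by have := H i; rewrite inE eqxx; apply.
by have := H j; rewrite !inE eqxx orbT eq_sym (negbTE ij) => ->.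
Qed.

Lemma comb (v u w : V) x1 y1 x2 y2 :
  (v + x1 *: u + y1 *: w) + (x2 *: u + y2 *: w) = v + (x1 + x2) *: u + (y1 + y2) *: w.
Proof.
by rewrite !scalerDl !addrA (addrAC _ (y1 *: w)).
Qed.

Variables i j : I.
Hypothesis hi : isr i.
Hypothesis hj : isr j.
Hypothesis ij : i != j.

Local Notation f := (refl i \o refl j).
Local Notation A := ((a i j)%:~R : F).
Local Notation B := ((a j i)%:~R : F).

Lemma aii : (a i i)%:~R = 2 :> F.
Proof. by move/eqP: hi => ->. Qed.
Lemma ajj : (a j j)%:~R = 2 :> F.
Proof. by move/eqP: hj => ->. Qed.

Lemma fstep u : f u = u + ((alphav j u * A - alphav i u) *: alpha i + (- alphav j u) *: alpha j).
Proof.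
rewrite /= /refl linD linN linZ cartan.
rewrite -addrA; congr (u + _); rewrite addrC; congr (_ + _).
- by rewrite -scaleNr opprB.
- by rewrite scaleNr.
Qed.

Lemma iterf k v :
  let: (P, Q, X, Y) := iter k (gst A B) (alphav i v, alphav j v, 0, 0) in
  [/\ iter k f v = v + X *: alpha i + Y *: alpha j,
      alphav i (iter k f v) = P & alphav j (iter k f v) = Q].
Proof.
elim: k => [|k IH]; first by rewrite /= !scale0r !addr0.
rewrite !iterS.
move: IH; case: (iter k (gst A B) (alphav i v, alphav j v, 0, 0)) => [[[P Q] X] Y] [e1 e2 e3].
rewrite fstep /= e2 e3 e1 comb; split => //.
- move: e2; rewrite e1 !linD !linZ !cartan aii => <-; ring.
- move: e3; rewrite e1 !linD !linZ !cartan ajj => <-; ring.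
Qed.

Lemma fid d : (forall P Q : F, let s := iter d (gst A B) (P, Q, 0, 0) in s.1.2 = 0 /\ s.2 = 0) ->
  forall v, iter d f v = v.
Proof.
move=> H v; have := iterf d v; have := H (alphav i v) (alphav j v).
case: (iter d (gst A B) _) => [[[P Q] X] Y] /= [-> ->] [-> _ _].
by rewrite !scale0r !addr0.
Qed.

Lemma intr_eq0' (z : int) : z%:~R = 0 :> F -> z = 0.
Proof.
case: RZ => ch _ _ _.
have c0 : forall n, (n%:R == 0 :> F) = (n == 0)%N by apply/pcharf0P.
case: z => n /=; first by move/eqP; rewrite c0 => /eqP ->.
by rewrite NegzE mulrNz => /eqP; rewrite oppr_eq0 c0.
Qed.

Lemma test m : iter m f (alpha i) = alpha i ->
  let s := iter m (gst (a i j) (a j i)) (2, a j i, 0, 0) in s.1.2 = 0 /\ s.2 = 0.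
Proof.
move=> H; have := iterf m (alpha i); rewrite !cartan aii.
have E := gst_morph (intr : {rmorphism int -> F}) (a i j) (a j i) m 2 (a j i) 0 0.
rewrite rmorph0 in E.
have e2 : (2 : F) = (2 : int)%:~R by [].
rewrite {1}e2 E.
case: (iter m (gst (a i j) (a j i)) _) => [[[P Q] X] Y] /= [e _ _].
move: H; rewrite e => /(congr1 (fun x => - alpha i + x)); rewrite -addrA addKr addNr => h.
have [hx hy] := indep2 ij h.
by split; apply: intr_eq0'.
Qed.

Lemma fin_case d m : (0 < d)%N ->
  (forall P Q : F, let s := iter d (gst A B) (P, Q, 0, 0) in s.1.2 = 0 /\ s.2 = 0) ->
  (forall k, (0 < k < d)%N -> let s := iter k (gst (a i j) (a j i)) (2, a j i, 0, 0) in
      (s.1.2 != 0) || (s.2 != 0)) ->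
  is_order f m -> m = d.
Proof.
move=> d0 Hd Hs [m0 hm hmin].
case: (ltngtP m d) => // h.
- have := Hs m; rewrite m0 h => /(_ isT); have := test (hm (alpha i)).
  by case: (iter m _ _) => [[[P Q] X] Y] /= [-> ->].
- have /hmin [v hv] : (0 < d < m)%N by rewrite d0 h.
  by case: hv; apply: fid.
Qed.

Lemma inf_case m : a i j < 0 -> a j i < 0 -> 4 <= a i j * a j i -> is_order f m -> False.
Proof.
move=> hA hB hAB [m0 hm _].
have := test (hm (alpha i)); rewrite g_h /= => [[_ hy]].
by move: (e_pos hA hB hAB m0); rewrite hy eqxx.
Qed.

Lemma castA (z : int) : a i j = z -> A = z%:~R.
Proof. by move=> ->. Qed.
Lemma castB (z : int) : a j i = z -> B = z%:~R.
Proof. by move=> ->. Qed.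

Lemma ORD_main m : is_order f m -> m \in [:: 2; 3; 4; 6]%N.
Proof.
move=> ho; case: BC => _ hneg hz.
have hA := hneg i j ij; have hB : a j i <= 0 by apply: hneg; rewrite eq_sym.
case: (eqVneq (a i j) 0) => [e0|n0].
  have e0' : a j i = 0 by apply/hz.
  rewrite (@fin_case 2 m) //.
  + move=> P Q; rewrite (castA e0) (castB e0') /=; split; ring.
  + by move=> [|[|]] //= _; rewrite e0 e0'; vm_compute.
have n0' : a j i != 0 by apply/eqP => /hz; apply/eqP.
have lA : a i j < 0 by move: n0 hA; lia.
have lB : a j i < 0 by move: n0' hB; lia.
case: (boolP (4 <= a i j * a j i)) => h4; first by case: (inf_case lA lB h4 ho).
have : (a i j = -1 /\ a j i = -1) \/ (a i j = -1 /\ a j i = -2) \/ (a i j = -2 /\ a j i = -1) \/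
       (a i j = -1 /\ a j i = -3) \/ (a i j = -3 /\ a j i = -1) by nia.
case=> [[e1 e2]|[[e1 e2]|[[e1 e2]|[[e1 e2]|[e1 e2]]]]].
- rewrite (@fin_case 3 m) //.
  + move=> P Q; rewrite (castA e1) (castB e2) /=; split; ring.
  + by move=> [|[|[|]]] //= _; rewrite e1 e2; vm_compute.
- rewrite (@fin_case 4 m) //.
  + move=> P Q; rewrite (castA e1) (castB e2) /=; split; ring.
  + by move=> [|[|[|[|]]]] //= _; rewrite e1 e2; vm_compute.
- rewrite (@fin_case 4 m) //.
  + move=> P Q; rewrite (castA e1) (castB e2) /=; split; ring.
  + by move=> [|[|[|[|]]]] //= _; rewrite e1 e2; vm_compute.
- rewrite (@fin_case 6 m) //.
  + move=> P Q; rewrite (castA e1) (castB e2) /=; split; ring.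
  + by move=> [|[|[|[|[|[|]]]]]] //= _; rewrite e1 e2; vm_compute.
- rewrite (@fin_case 6 m) //.
  + move=> P Q; rewrite (castA e1) (castB e2) /=; split; ring.
  + by move=> [|[|[|[|[|[|]]]]]] //= _; rewrite e1 e2; vm_compute.
Qed.
End Ord.


Section Main.
Variable I : countType.
Variable a : I -> I -> int.
Variables (F : fieldType) (V : lmodType F) (alpha : I -> V) (alphav : I -> V -> F).

Local Notation T := (I * nat)%type.
Local Notation isr := (is_real a).

Inductive Xrel : seq T -> seq T -> Prop :=
| X_sq p : isr p.1 -> Xrel [:: p; p] [::]
| X_braid p q m : isr p.1 -> isr q.1 -> p.1 != q.1 -> m \in [:: 2; 3; 4; 6]%N ->
    is_order (refl alpha alphav p.1 \o refl alpha alphav q.1) m -> Xrel (altw p q m) [::]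
| X_comm p q : ~~ isr p.1 -> p != q -> a p.1 q.1 = 0 -> Xrel [:: p; q] [:: q; p].

Definition Xeq := congr_cl Xrel.

Lemma count_altw (r p q : T) m : r != p -> r != q -> count_mem r (altw p q m) = 0%N.
Proof.
move=> rp rq; elim: m => [|m IH] //; rewrite altwS /= IH.
by rewrite eq_sym (negbTE rp) eq_sym (negbTE rq).
Qed.

Lemma count_altw_gen (U : eqType) (r p q : U) m : r != p -> r != q -> count_mem r (altw p q m) = 0%N.
Proof.
move=> rp rq; elim: m => [|m IH] //; rewrite altwS /= IH.
by rewrite eq_sym (negbTE rp) eq_sym (negbTE rq).
Qed.

Lemma neq_real (r p : T) : ~~ isr r.1 -> isr p.1 -> r != p.
Proof. by move=> hr hp; apply/eqP => e; move: hr; rewrite e hp. Qed.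

Lemma Xrel_count r u v : ~~ isr r.1 -> Xrel u v -> count_mem r u = count_mem r v.
Proof.
move=> hr [p hp|p q m hp hq _ _ _|p q _ _ _].
- by move: (neq_real hr hp); rewrite eq_sym => /negbTE /= ->.
- by rewrite count_altw // (neq_real hr).
- by rewrite /= !addn0 addnC.
Qed.

Lemma Xeq_count r u v : ~~ isr r.1 -> Xeq u v -> count_mem r u = count_mem r v.
Proof.
move=> hr; elim=> [s x y t H| w | w w' _ IH | w1 w2 w3 _ IH1 _ IH2] //.
- by rewrite !count_cat (Xrel_count hr H).
- by rewrite IH1.
Qed.

Lemma Xeq_mem r u v : ~~ isr r.1 -> Xeq u v -> (r \in u) = (r \in v).
Proof. by move=> hr H; rewrite !mem_count (Xeq_count hr H). Qed.

Lemma Xrel_rem_in r u v : ~~ isr r.1 -> Xrel u v -> r \in u -> rem r u = rem r v.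
Proof.
move=> hr [p hp|p q m hp hq _ _ _|p q _ pq _] ru.
- by move: ru; rewrite mem_count /= eq_sym (negbTE (neq_real hr hp)).
- by move: ru; rewrite mem_count count_altw // (neq_real hr).
- move: ru; rewrite !inE => /orP [] /eqP ->.
  + by move/eqP: pq => pq /=; do !case: eqP => //; move=> *; subst.
  + by move/eqP: pq => pq /=; do !case: eqP => //; move=> *; subst.
Qed.

Lemma Xeq_rem r u v : ~~ isr r.1 -> Xeq u v -> Xeq (rem r u) (rem r v).
Proof.
move=> hr; elim=> [s x y t H| w | w w' _ IH | w1 w2 w3 _ IH1 _ IH2].
- rewrite !rem_cat; case: (r \in s); first exact: cc_rel.
  have hm : (r \in x) = (r \in y).
    by rewrite !mem_count (Xrel_count hr H).
  rewrite -hm; case: ifP => rx.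
  + rewrite (Xrel_rem_in hr H rx); exact: cc_refl.
  + exact: cc_rel.
- exact: cc_refl.
- exact: cc_sym.
- exact: cc_trans IH2.
Qed.

Definition act (p : T) (u : seq T) : seq T :=
  if isr p.1 then p :: u
  else if p \in u then
    (if excluded_middle_informative (Xeq u (p :: rem p u)) then rem p u else u)
  else p :: u.

Lemma act_compat p u v : Xeq u v -> Xeq (act p u) (act p v).
Proof.
move=> H; rewrite /act; case: ifP => hp; first exact: cc_cons.
have hm := Xeq_mem (negbT hp) H; rewrite -hm.
case: ifP => pu; last exact: cc_cons.
have Hr := Xeq_rem (negbT hp) H.
case: excluded_middle_informative => Cu; case: excluded_middle_informative => Cv //.
- case: Cv; apply: cc_trans (cc_sym H) _; apply: cc_trans Cu _; exact: cc_cons.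
- case: Cu; apply: cc_trans H _; apply: cc_trans Cv _; apply: cc_cons; exact: cc_sym.
Qed.

Definition simple (u : seq T) := forall r, ~~ isr r.1 -> (count_mem r u <= 1)%N.

Lemma simple_rem p u : simple u -> simple (rem p u).
Proof. by move=> su r hr; rewrite count_mem_rem; apply: leq_trans (leq_subr _ _) (su r hr). Qed.

Lemma simple_cons p u : simple u -> (isr p.1 \/ p \notin u) -> simple (p :: u).
Proof.
move=> su h r hr /=; case: (eqVneq p r) => [epr|npr]; last exact: su.
subst r; case: h => [hp|pu]; first by move: hr; rewrite hp.
by move/count_memPn: pu => ->.
Qed.

Lemma simple_act p u : simple u -> simple (act p u).
Proof.
move=> su; rewrite /act; case: ifP => hp; first by apply: simple_cons => //; left.
case: ifP => pu; last by apply: simple_cons => //; right; rewrite pu.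
by case: excluded_middle_informative => C; [apply: simple_rem|].

Qed.

Lemma simple_notin p u : ~~ isr p.1 -> simple u -> p \notin rem p u.
Proof.
move=> hp su; apply/count_memPn; rewrite count_mem_rem.
have := su p hp; case: (boolP (p \in u)) => pu; last by move/count_memPn: pu => ->.
by rewrite eqxx; move: (pu); rewrite mem_count; case: (count_mem p u) => [|[|]].
Qed.

Lemma act_real p u : isr p.1 -> act p u = p :: u.
Proof. by rewrite /act => ->. Qed.

Lemma act_notin p u : p \notin u -> act p u = p :: u.
Proof. by rewrite /act => /negbTE ->; case: ifP. Qed.

Lemma Xsq_real p u : isr p.1 -> Xeq (p :: p :: u) u.
Proof. by move=> hp; apply: (@cc_rel _ _ [::] [:: p; p] [::] u); apply: X_sq. Qed.

Lemma act_inC p u : ~~ isr p.1 -> p \in u -> Xeq u (p :: rem p u) -> act p u = rem p u.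
Proof.
move=> hp pu C; rewrite /act (negbTE hp) pu.
by case: excluded_middle_informative.
Qed.

Lemma act_innC p u : ~~ isr p.1 -> p \in u -> ~ Xeq u (p :: rem p u) -> act p u = u.
Proof.
move=> hp pu C; rewrite /act (negbTE hp) pu.
by case: excluded_middle_informative.
Qed.

Lemma act_invol p u : simple u -> Xeq (act p (act p u)) u.
Proof.
move=> su; case: (boolP (isr p.1)) => hp.
  by rewrite !act_real //; apply: Xsq_real.
case: (boolP (p \in u)) => pu; last first.
  rewrite (act_notin pu) act_inC //= ?inE ?eqxx //=; last exact: cc_refl.
  exact: cc_refl.
case: (classic (Xeq u (p :: rem p u))) => C.
- rewrite (act_inC hp pu C) act_notin; [exact: cc_sym | exact: simple_notin].
- rewrite !(act_innC hp pu C); exact: cc_refl.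
Qed.

Lemma Xcomm p q u : ~~ isr p.1 -> p != q -> a p.1 q.1 = 0 -> Xeq (p :: q :: u) (q :: p :: u).
Proof. by move=> hp pq hpq; apply: (@cc_rel _ _ [::] [:: p; q] [:: q; p] u); apply: X_comm. Qed.

Lemma rem_neq (p q : T) u : p != q -> rem p (q :: u) = q :: rem p u.
Proof. by move=> pq; rewrite rem_cons eq_sym (negbTE pq). Qed.

Lemma rem_head (q : T) u : rem q (q :: u) = u.
Proof. by rewrite rem_cons eqxx. Qed.

Lemma mem_neq (p q : T) u : p != q -> (p \in q :: u) = (p \in u).
Proof. by move=> pq; rewrite inE (negbTE pq). Qed.

Lemma mem_rem_neq (p q : T) u : p != q -> (p \in rem q u) = (p \in u).
Proof.
move=> pq; case: (boolP (p \in u)) => pu; first by rewrite rem_mem.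
by apply/negbTE; apply: contra pu; apply: mem_rem.
Qed.

Local Notation ct := cc_trans.
Local Notation cs := cc_sym.

Lemma act_comm p q u : ~~ isr p.1 -> p != q -> a p.1 q.1 = 0 -> simple u ->
  Xeq (act p (act q u)) (act q (act p u)).
Proof.
move=> hp pq hpq su.
have qp : q != p by rewrite eq_sym.
case: (boolP (isr q.1)) => hq.
  rewrite !(act_real _ hq).
  case: (boolP (p \in u)) => pu; last first.
    by rewrite !act_notin ?mem_neq //; apply: Xcomm.
  have pu' : p \in q :: u by rewrite mem_neq.
  case: (classic (Xeq u (p :: rem p u))) => C.
  - rewrite (act_inC hp pu C) (act_inC hp pu') ?rem_neq //; first exact: cc_refl.
    apply: ct (cc_cons q C) _; exact: cs (Xcomm _ hp pq hpq).
  - rewrite (act_innC hp pu C) (act_innC hp pu') ?rem_neq //; first exact: cc_refl.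
    move=> A; apply: C.
    apply: ct (cs (Xsq_real u hq)) _; apply: ct (cc_cons q A) _.
    apply: ct (cc_cons q (Xcomm _ hp pq hpq)) _; exact: Xsq_real.
case: (boolP (p \in u)) => pu; case: (boolP (q \in u)) => qu.
-
  have pu' : p \in rem q u by rewrite mem_rem_neq.
  have qu' : q \in rem p u by rewrite mem_rem_neq.
  case: (classic (Xeq u (p :: rem p u))) => C;
  case: (classic (Xeq u (q :: rem q u))) => D.
  + have C' : Xeq (rem q u) (p :: rem p (rem q u)).
      by have := Xeq_rem hq C; rewrite rem_neq // rem_rem.
    have D' : Xeq (rem p u) (q :: rem q (rem p u)).
      by have := Xeq_rem hp D; rewrite rem_neq // rem_rem.
    rewrite (act_inC hq qu D) (act_inC hp pu C) (act_inC hp pu' C') (act_inC hq qu' D') rem_rem.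
    exact: cc_refl.
  + rewrite (act_innC hq qu D) (act_inC hp pu C) act_innC //; first exact: cc_refl.
    move=> E; apply: D.
    have C' : Xeq (rem q u) (p :: rem q (rem p u)).
      by have := Xeq_rem hq C; rewrite rem_neq.
    apply: cs; apply: ct (cc_cons q C') _; apply: ct (cs (Xcomm _ hp pq hpq)) _.
    apply: ct (cc_cons p (cs E)) _; exact: cs C.
  + rewrite (act_innC hp pu C) (act_inC hq qu D) act_innC //; first exact: cc_refl.
    move=> E; apply: C.
    have D' : Xeq (rem p u) (q :: rem p (rem q u)).
      by have := Xeq_rem hp D; rewrite rem_neq.
    apply: cs; apply: ct (cc_cons p D') _; apply: ct (Xcomm _ hp pq hpq) _.
    apply: ct (cc_cons q (cs E)) _; exact: cs D.
  + rewrite (act_innC hq qu D) (act_innC hp pu C) (act_innC hq qu D); exact: cc_refl.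
-
  have pu' : p \in q :: u by rewrite mem_neq.
  rewrite (act_notin qu).
  case: (classic (Xeq u (p :: rem p u))) => C.
  + rewrite (act_inC hp pu C) (act_inC hp pu') ?rem_neq //.
      rewrite act_notin; first exact: cc_refl.
      by apply: contra qu; apply: mem_rem.
    apply: ct (cc_cons q C) _; exact: cs (Xcomm _ hp pq hpq).
  + rewrite (act_innC hp pu C) (act_innC hp pu') ?(act_notin qu); first exact: cc_refl.
    move=> A; apply: C; have := Xeq_rem hq A.
    by rewrite !rem_cons !eqxx (negbTE pq) (negbTE qp) !rem_cons eqxx.
-
  have qu' : q \in p :: u by rewrite mem_neq.
  rewrite (act_notin pu).
  case: (classic (Xeq u (q :: rem q u))) => D.
  + rewrite (act_inC hq qu D) (act_inC hq qu') ?rem_neq //.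
      rewrite act_notin; first exact: cc_refl.
      by apply: contra pu; apply: mem_rem.
    apply: ct (cc_cons p D) _; exact: Xcomm.
  + rewrite (act_innC hq qu D) (act_innC hq qu') ?(act_notin pu); first exact: cc_refl.
    move=> B; apply: D; have := Xeq_rem hp B.
    by rewrite !rem_cons !eqxx (negbTE qp) (negbTE pq) rem_cons eqxx.
- rewrite !act_notin ?mem_neq //; exact: Xcomm.
Qed.

Hypothesis ORD : forall i j m, isr i -> isr j -> i != j ->
  is_order (refl alpha alphav i \o refl alpha alphav j) m -> m \in [:: 2; 3; 4; 6]%N.
Hypothesis BCa : forall i j, a i j = 0 -> a j i = 0.

Local Notation actw z w := (foldr act z w).

Lemma simple_actw z w : simple z -> simple (actw z w).
Proof. by move=> sz; elim: w => [|p w IH] //=; apply: simple_act. Qed.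

Lemma actw_compat w u v : Xeq u v -> Xeq (actw u w) (actw v w).
Proof. by move=> H; elim: w => [|p w IH] //=; apply: act_compat. Qed.

Lemma actw_real z w : all (fun p : T => isr p.1) w -> actw z w = w ++ z.
Proof. by elim: w => [|p w IH] //= /andP [hp hw]; rewrite act_real // IH. Qed.

Lemma all_altw (P : pred T) p q m : P p -> P q -> all P (altw p q m).
Proof. by move=> hp hq; elim: m => [|m IH] //=; rewrite hp hq. Qed.

Lemma act_comm_gen p q u : ~~ (isr p.1 && isr q.1) -> p != q -> a p.1 q.1 = 0 -> simple u ->
  Xeq (act p (act q u)) (act q (act p u)).
Proof.
move=> h pq hpq su; case: (boolP (isr p.1)) => hp.
- have hq : ~~ isr q.1 by move: h; rewrite hp.
  apply: cs; apply: act_comm => //; [by rewrite eq_sym | exact: BCa].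
- exact: act_comm.
Qed.

Lemma Crel_act u v z : Crel a alpha alphav u v -> simple z -> Xeq (actw z u) (actw z v).
Proof.
case=> [p _|p q m tp tq pq cf] sz.
- exact: act_invol.
- move: cf; rewrite /cox_fin; case: ifP => hpq.
  + move/andP: hpq => [hp hq] ord.
    have p1q1 : p.1 != q.1.
      apply: contra pq => /eqP e; move: tp tq; rewrite /tvalid hp hq => /eqP t1 /eqP t2.
      by apply/eqP; apply: injective_projections => //; rewrite t1 t2.
    rewrite actw_real; last by apply: all_altw.
    apply: (@cc_rel _ _ [::] _ [::] z); apply: X_braid => //; exact: (ORD hp hq p1q1 ord).
  + case=> -> hpq0 /=.
    have C y : simple y -> Xeq (act p (act q y)) (act q (act p y)).
      by move=> sy; apply: act_comm_gen => //; rewrite hpq.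
    apply: ct (act_compat p (act_compat q (C z sz))) _.
    apply: ct (act_compat p (act_invol q (simple_act p sz))) _.
    exact: act_invol.
Qed.

Lemma Ceq_act x y : Ceq a alpha alphav x y -> forall z, simple z -> Xeq (actw z x) (actw z y).
Proof.
elim=> [s u v t H| w | w w' _ IH | w1 w2 w3 _ IH1 _ IH2] z sz.
- rewrite !foldr_cat; apply: actw_compat; apply: Crel_act => //; exact: simple_actw.
- exact: cc_refl.
- exact: cs (IH z sz).
- exact: ct (IH1 z sz) (IH2 z sz).
Qed.

Lemma sigmaw_lab i n l : ~~ isr i -> (i, n) \in sigmaw a l -> (n <= count_mem i l)%N.
Proof.
move=> hi; elim: l => [|j l IH] //=; rewrite inE => /orP [/eqP [ei en]|/IH h].
- by subst j; move: en; rewrite (negbTE hi) eqxx => ->.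
- exact: leq_trans h (leq_addl _ _).
Qed.

Lemma actw_sigmaw w : actw [::] (sigmaw a w) = sigmaw a w.
Proof.
elim: w => [|i l IH] //=; rewrite IH; case: (boolP (isr i)) => hi.
  by rewrite act_real.
rewrite act_notin //; apply/negP => /(sigmaw_lab hi).
by rewrite ltnn.
Qed.

Lemma simple_nil : simple [::].
Proof. by []. Qed.

Lemma map_altw (U W : Type) (f : U -> W) p q m : map f (altw p q m) = altw (f p) (f q) m.
Proof. by elim: m => [|m IH] //=; rewrite IH. Qed.

Lemma Xeq_forget x y : Xeq x y -> Weq a alpha alphav (map fst x) (map fst y).
Proof.
elim=> [s u v t H| w | w w' _ IH | w1 w2 w3 _ IH1 _ IH2].
- rewrite !map_cat; case: H => [p hp|p q m hp hq pq hm ord|p q hp pq h0].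
  + by apply: cc_rel; apply: Wrel_sq.
  + rewrite map_altw; apply: cc_rel; exact: Wrel_braid1.
  + case: (eqVneq q.1 p.1) => [e|ne] /=.
    * rewrite e; exact: cc_refl.
    * by apply: (@cc_rel _ _ (map fst s) [:: p.1; q.1] [:: q.1; p.1] (map fst t)); apply: Wrel_comm.
- exact: cc_refl.
- exact: cc_sym.
- exact: cc_trans IH2.
Qed.

Lemma map_sigmaw w : map fst (sigmaw a w) = w.
Proof. by elim: w => [|i l IH] //=; rewrite IH. Qed.

Lemma inj_dir w w' : Ceq a alpha alphav (sigmaw a w) (sigmaw a w') -> Weq a alpha alphav w w'.
Proof.
move=> H; have := Ceq_act H simple_nil; rewrite !actw_sigmaw => /Xeq_forget.
by rewrite !map_sigmaw.
Qed.

Fixpoint sigo (c : I -> nat) (w : seq I) : seq T :=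
  match w with
  | [::] => [::]
  | i :: l => (i, if isr i then 1%N else (count_mem i l + c i).+1) :: sigo c l
  end.

Lemma sigo0 w : sigmaw a w = sigo (fun _ => 0%N) w.
Proof. by elim: w => [|i l IH] //=; rewrite IH addn0. Qed.

Lemma sigo_cat c s x : sigo c (s ++ x) = sigo (fun i => count_mem i x + c i)%N s ++ sigo c x.
Proof.
elim: s => [|i l IH] //=; rewrite IH count_cat addnA //.
Qed.

Lemma eq_sigo c c' s : (forall i, ~~ isr i -> c i = c' i) -> sigo c s = sigo c' s.
Proof.
move=> h; elim: s => [|i l IH] //=; rewrite IH; case: (boolP (isr i)) => hi //.
by rewrite h.
Qed.

Lemma Wrel_count i u v : ~~ isr i -> Wrel a alpha alphav u v -> count_mem i u = count_mem i v.
Proof.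
move=> hi [j hj|j k m hj hk _ _ _|j k m hj hk _ _ _|j k _ _ _].
- rewrite /= addn0; case: eqP => //= e; move: hi; by rewrite -e hj.
- rewrite count_altw_gen //; apply/eqP => e; move: hi; by rewrite e ?hj ?hk.
- rewrite count_altw_gen //; apply/eqP => e; move: hi; by rewrite e ?hj ?hk.
- by rewrite /= !addn0 addnC.
Qed.

Local Notation Cq := (Ceq a alpha alphav).

Lemma Crel_Cq u v : Crel a alpha alphav u v -> Cq u v.
Proof. by move=> H; have := @cc_rel _ _ [::] u v [::] H; rewrite !cats0. Qed.

Lemma Ceq_sq p u : tvalid a p -> Cq (p :: p :: u) u.
Proof. by move=> tp; apply: (@cc_rel _ _ [::] [:: p; p] [::] u); apply: Crel_sq. Qed.

Lemma altw_shift (p q : T) m : q :: altw p q m = altw q p m ++ [:: q].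
Proof. by elim: m => [|m IH] //=; rewrite -IH. Qed.

Lemma Ceq_altw_sym p q m : tvalid a q -> Cq (altw p q m) [::] -> Cq (altw q p m) [::].
Proof.
move=> tq H.
apply: ct (_ : Cq _ (altw q p m ++ [:: q; q])) _.
  by apply: cs; have := cc_catl (altw q p m) (Ceq_sq [::] tq); rewrite cats0.
rewrite -cat1s catA -altw_shift.
apply: ct (_ : Cq _ ([:: q] ++ [::] ++ [:: q])) _.
  by rewrite -cat1s -catA; apply: cc_ctx.
exact: Ceq_sq.
Qed.

Lemma Ceq_comm p q : tvalid a p -> tvalid a q -> Cq [:: p; q; p; q] [::] -> Cq [:: p; q] [:: q; p].
Proof.
move=> tp tq H.
apply: cs; apply: ct (_ : Cq _ ([:: q; p] ++ [:: p; q; p; q])) _.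
  by apply: cs; have := cc_catl [:: q; p] H; rewrite cats0.
apply: ct (_ : Cq _ ([:: q] ++ [::] ++ [:: q; p; q])) _.
  by apply: (@cc_ctx _ _ [:: q] [:: q; p; q] [:: p; p]); apply: Ceq_sq.
exact: Ceq_sq.
Qed.

Lemma tvalid_lab i n : tvalid a (i, if isr i then 1%N else n.+1).
Proof. by rewrite /tvalid /=; case: (isr i). Qed.

Lemma sigo_altw c i j m : isr i -> isr j -> sigo c (altw i j m) = altw (i, 1%N) (j, 1%N) m.
Proof. by move=> hi hj; elim: m => [|m IH] //=; rewrite hi hj IH. Qed.

Lemma Wrel_C c u v : Wrel a alpha alphav u v -> Cq (sigo c u) (sigo c v).
Proof.
case=> [i hi|i j m hi hj ij hm ord|i j m hi hj ij hm ord|i j hi ji h0].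
- by rewrite /= hi; apply: Ceq_sq; rewrite /tvalid /= hi.
- rewrite sigo_altw //=.
  apply: Crel_Cq; apply: Crel_cox.
  + by rewrite /tvalid /= hi.
  + by rewrite /tvalid /= hj.
  + by apply: contra ij => /eqP [->].
  + by rewrite /cox_fin /= hi hj.
- rewrite sigo_altw //=.
  apply: Ceq_altw_sym; first by rewrite /tvalid /= hj.
  apply: Crel_Cq; apply: Crel_cox.
  + by rewrite /tvalid /= hi.
  + by rewrite /tvalid /= hj.
  + by apply: contra ij => /eqP [->].
  + by rewrite /cox_fin /= hi hj.
- have ij : i != j by rewrite eq_sym.
  rewrite /= (negbTE hi) (negbTE ji) (negbTE ij) /= !add0n.
  set p := (i, _); set q := (j, _).
  have tp : tvalid a p by rewrite /tvalid /= (negbTE hi).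
  have tq : tvalid a q by rewrite /q; apply: tvalid_lab.
  apply: Ceq_comm => //.
  apply: Crel_Cq; change [:: p; q; p; q] with (altw p q 2); apply: Crel_cox => //.
  + by apply: contra ji => /eqP [->].
  + by rewrite /cox_fin /= (negbTE hi) /=.
Qed.

Lemma wd_dir w w' : Weq a alpha alphav w w' -> Cq (sigmaw a w) (sigmaw a w').
Proof.
rewrite !sigo0; elim=> [s u v t H| x | x x' _ IH | w1 w2 w3 _ IH1 _ IH2].
- rewrite !sigo_cat.
  have e : forall i, ~~ isr i -> (count_mem i (u ++ t) + 0 = count_mem i (v ++ t) + 0)%N.
    by move=> i hi; rewrite !count_cat (Wrel_count hi H).
  rewrite (eq_sigo s e); apply: cc_ctx; exact: Wrel_C.
- exact: cc_refl.
- exact: cs.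
- exact: ct IH2.
Qed.
End Main.


Unset Implicit Arguments.

Theorem lemma2p2p5 (I : countType) (a : I -> I -> int)
  (F : fieldType) (V : lmodType F) (alpha : I -> V) (alphav : I -> V -> F) :
  BC_matrix a -> realization a alpha alphav ->
  forall w w' : seq I,
    Weq a alpha alphav w w' <-> Ceq a alpha alphav (sigmaw a w) (sigmaw a w').
Proof.
move=> BC RZ w w'; split.
- exact: wd_dir.
- apply: inj_dir.
  + move=> i j m hi hj ij ho; exact: (ORD_main BC RZ hi hj ij ho).
  + by move=> i j; case: BC => _ _ h; move/h.
Qed.
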